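(* Let $R$ be a complete discrete valuation ring with fraction field $K$, maximal ideal $\mathfrak m$ and residue field $k=R/\mathfrak m$ of characteristic different from $2$. Let $E$ be an elliptic curve over $K$ given by $y^2=x^3+ax^2+bx$ with $a,b\in K$, let $E'$ be the elliptic curve $y^2=x^3-2ax^2+(a^2-4b)x$, and let $\delta_{E'}\colon E'(K)\to K^\times/(K^\times)^2$ be the homomorphism defined below. Regard $R^\times/(R^\times)^2$ as a subgroup of $K^\times/(K^\times)^2$. Suppose that, with respect to $R$ (via Tate's algorithm), $E$ and $E'$ have Kodaira symbols $\mathrm{I}_{2n}$ and $\mathrm{I}_n$, respectively, for some integer $n\geq 0$. Then: (i) if $E$ has split multiplicative reduction or $n$ is odd, then $\operatorname{Im}(\delta_{E'})=1$; (ii) if $E$ and $E'$ have good reduction (i.e. $n=0$), then $\operatorname{Im}(\delta_{E'})\subseteq R^\times/(R^\times)^2$.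
   Context: Let $\phi\colon E\to E'$ be the degree $2$ isogeny with kernel generated by $(0,0)$. The homomorphism $\delta_{E'}$ is the connecting homomorphism $E'(K)\to H^1(\operatorname{Gal}(\overline K/K),\ker\phi)\cong K^\times/(K^\times)^2$ (using $\ker\phi\cong\{\pm1\}$ as Galois modules); its kernel is $\phi(E(K))$, and explicitly $\delta_{E'}(O)=1$, $\delta_{E'}((0,0))=(a^2-4b)\cdot(K^\times)^2$, and $\delta_{E'}((x,y))=x\cdot(K^\times)^2$ for $(x,y)\in E'(K)\setminus\{O,(0,0)\}$. *)

(* Defs.v *)
From HB Require Import structures.
From mathcomp Require Import all_boot all_order all_algebra.
Set Implicit Arguments. Unset Strict Implicit. Unset Printing Implicit Defensive.
Import Order.TTheory GRing.Theory Num.Theory.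
Local Open Scope ring_scope.

Section Defs.
Variable K : fieldType.

(** * Discrete valuations on K (values on nonzero elements; v 0 is irrelevant) *)
Definition is_discrete_valuation (v : K -> int) : Prop :=
  [/\ (forall x y, x != 0 -> y != 0 -> v (x * y) = v x + v y),
      (forall x y, x != 0 -> y != 0 -> x + y != 0 ->
         Num.min (v x) (v y) <= v (x + y)) &
      (exists pi : K, pi != 0 /\ v pi = 1)].

Definition vge (v : K -> int) (x : K) (m : int) : Prop := x = 0 \/ m <= v x.
Definition integral (v : K -> int) (x : K) : Prop := vge v x 0.
Definition veq (v : K -> int) (x : K) (m : int) : Prop := x <> 0 /\ v x = m.
Definition unitR (v : K -> int) (x : K) : Prop := veq v x 0.

Definition v_cauchy (v : K -> int) (u : nat -> K) : Prop :=
  forall N : int, exists M : nat, forall p q, (M <= p)%N -> (M <= q)%N ->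
    vge v (u p - u q) N.
Definition v_converges (v : K -> int) (u : nat -> K) (l : K) : Prop :=
  forall N : int, exists M : nat, forall p, (M <= p)%N -> vge v (u p - l) N.
Definition v_complete (v : K -> int) : Prop :=
  forall u, v_cauchy v u -> exists l, v_converges v u l.

Record wmodel := WModel { a1 : K; a2 : K; a3 : K; a4 : K; a6 : K }.

Definition b2 W := a1 W ^+ 2 + 4 * a2 W.
Definition b4 W := 2 * a4 W + a1 W * a3 W.
Definition b6 W := a3 W ^+ 2 + 4 * a6 W.
Definition b8 W := a1 W ^+ 2 * a6 W + 4 * a2 W * a6 W - a1 W * a3 W * a4 W
                   + a2 W * a3 W ^+ 2 - a4 W ^+ 2.
Definition c4 W := b2 W ^+ 2 - 24 * b4 W.
Definition disc W := - b2 W ^+ 2 * b8 W - 8 * b4 W ^+ 3 - 27 * b6 W ^+ 2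
                     + 9 * b2 W * b4 W * b6 W.

(** W' is obtained from W by the change of variables
    x = u^2 x' + r, y = u^3 y' + s u^2 x' + t  (Silverman, Table 3.1) *)
Definition iso_model (W W' : wmodel) : Prop :=
  exists u r s t : K, u != 0 /\
  [/\ u * a1 W' = a1 W + 2 * s,
      u ^+ 2 * a2 W' = a2 W - s * a1 W + 3 * r - s ^+ 2,
      u ^+ 3 * a3 W' = a3 W + r * a1 W + 2 * t,
      u ^+ 4 * a4 W' = a4 W - s * a3 W + 2 * r * a2 W - (t + r * s) * a1 W
                       + 3 * r ^+ 2 - 2 * s * t &
      u ^+ 6 * a6 W' = a6 W + r * a4 W + r ^+ 2 * a2 W + r ^+ 3 - t * a3 W
                       - t ^+ 2 - r * t * a1 W].

Definition integral_model (v : K -> int) (W : wmodel) : Prop :=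
  [/\ integral v (a1 W), integral v (a2 W), integral v (a3 W),
      integral v (a4 W) & integral v (a6 W)].

(** Kodaira symbol I_m, as produced by Tate's algorithm (steps 1 and 2):
    m = 0 : some integral model has unit discriminant (step 1);
    m >= 1: some integral model has pi | a3, a4, a6, pi not dividing b2,
            and v(disc) = m (step 2). *)
Definition kodaira_I (v : K -> int) (W : wmodel) (m : nat) : Prop :=
  exists W', [/\ iso_model W W', integral_model v W' &
    if m == 0%N then veq v (disc W') 0
    else [/\ vge v (a3 W') 1, vge v (a4 W') 1, vge v (a6 W') 1,
             veq v (b2 W') 0 & veq v (disc W') (m%:Z)]].

(** Split multiplicative reduction (Tate's algorithm, step 2): multiplicative
    reduction, and T^2 + a1 T - a2 splits over the residue field. *)
Definition split_mult (v : K -> int) (W : wmodel) : Prop :=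
  exists W', [/\ iso_model W W', integral_model v W',
    [/\ vge v (a3 W') 1, vge v (a4 W') 1, vge v (a6 W') 1,
        veq v (b2 W') 0 & vge v (disc W') 1] &
    exists T : K, integral v T /\ vge v (T ^+ 2 + a1 W' * T - a2 W') 1].

Definition curveE (a b : K) : wmodel := WModel 0 a 0 b 0.
Definition curveE' (a b : K) : wmodel := WModel 0 (- 2 * a) 0 (a ^+ 2 - 4 * b) 0.

(** Points of y^2 = x^3 + A x^2 + B x over K; None is the point O *)
Definition on_curve2 (A B : K) (P : option (K * K)) : Prop :=
  match P with
  | None => True
  | Some (x, y) => y ^+ 2 = x ^+ 3 + A * x ^+ 2 + B * x
  end.

(** A representative in K^x of delta_{E'}(P) in K^x/(K^x)^2 *)
Definition delta_E'_rep (a b : K) (P : option (K * K)) : K :=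
  match P with
  | None => 1
  | Some (x, y) => if (x == 0) && (y == 0) then a ^+ 2 - 4 * b else x
  end.

Definition trivial_sq_class (z : K) : Prop := exists s : K, s != 0 /\ z = s ^+ 2.
Definition in_unit_sq_class (v : K -> int) (z : K) : Prop :=
  exists w s : K, unitR v w /\ s != 0 /\ z = w * s ^+ 2.

End Defs.

(* Main.v *)
Require Import Defs.
From HB Require Import structures.
From mathcomp Require Import all_boot all_order all_algebra ring lra zify.
Import Order.TTheory GRing.Theory Num.Theory.
Set Implicit Arguments. Unset Strict Implicit.
Local Open Scope ring_scope.

Definition c6 (K : fieldType) (W : wmodel K) := - b2 W ^+ 3 + 36 * b2 W * b4 W - 216 * b6 W.

Section Val.
Variable K : fieldType.
Variable v : K -> int.
Hypothesis hv : is_discrete_valuation v.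

Lemma vM x y : x != 0 -> y != 0 -> v (x * y) = v x + v y.
Proof. by case: hv => h _ _; apply: h. Qed.

Lemma vD x y : x != 0 -> y != 0 -> x + y != 0 -> (v x <= v (x + y)) || (v y <= v (x + y)).
Proof. case: hv => _ h _ hx hy hxy; have := h _ _ hx hy hxy.
case: (ltP (v x) (v y)) => _ H; [by rewrite H | by rewrite H orbT]. Qed.

Lemma v1 : v 1 = 0.
Proof. have h : v 1 = v 1 + v 1 by rewrite -vM ?mulr1 ?oner_neq0.
lia. Qed.

Lemma vN1 : v (-1) = 0.
Proof. have h : (-1 : K) != 0 by rewrite oppr_eq0 oner_neq0.
have := vM h h; rewrite mulrNN mulr1 v1; lia. Qed.

Lemma vN x : v (- x) = v x.
Proof. case: (eqVneq x 0) => [->|hx]; first by rewrite oppr0.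
have h : (-1 : K) != 0 by rewrite oppr_eq0 oner_neq0.
by rewrite -mulN1r vM // vN1 add0r. Qed.

Lemma vV x : x != 0 -> v (x^-1) = - v x.
Proof. move=> hx; have hi : x^-1 != 0 by rewrite invr_eq0.
have := vM hx hi; rewrite mulfV // v1; lia. Qed.

Lemma vX x n : x != 0 -> v (x ^+ n) = v x * n%:Z.
Proof. move=> hx; elim: n => [|n IH]; first by rewrite expr0 v1 mulr0.
rewrite exprS vM ?expf_neq0 // IH; lia. Qed.

Lemma vge0 m : vge v 0 m. Proof. by left. Qed.

Lemma vgeW x m k : vge v x m -> k <= m -> vge v x k.
Proof. case=> [->|h] hk; [by left|right; lia]. Qed.

Lemma vgeN x m : vge v x m -> vge v (- x) m.
Proof. by case=> [->|h]; [left; rewrite oppr0|right; rewrite vN]. Qed.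

Lemma vgeD x y m : vge v x m -> vge v y m -> vge v (x + y) m.
Proof.
case=> [->|hx]; first by rewrite add0r; apply. case=> [->|hy]; first by rewrite addr0; right.
case: (eqVneq x 0) => [->|x0]; first by rewrite add0r; right.
case: (eqVneq y 0) => [->|y0]; first by rewrite addr0; right.
case: (eqVneq (x + y) 0) => [->|s0]; first by left.
right; have := vD x0 y0 s0; case/orP=> h; [exact: le_trans hx h|exact: le_trans hy h]. Qed.

Lemma vgeB x y m : vge v x m -> vge v y m -> vge v (x - y) m.
Proof. by move=> hx hy; apply: vgeD hx (vgeN hy). Qed.

Lemma vgeM x y m k : vge v x m -> vge v y k -> vge v (x * y) (m + k).
Proof.
case=> [->|hx]; first by rewrite mul0r; left. case=> [->|hy]; first by rewrite mulr0; left.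
case: (eqVneq x 0) => [->|x0]; first by rewrite mul0r; left.
case: (eqVneq y 0) => [->|y0]; first by rewrite mulr0; left.
right; rewrite vM //; lia. Qed.

Lemma veqM x y m k : veq v x m -> veq v y k -> veq v (x * y) (m + k).
Proof. case=> /eqP x0 hx [/eqP y0 hy]; split; first by apply/eqP; rewrite mulf_neq0.
by rewrite vM // hx hy. Qed.

Lemma veqN x m : veq v x m -> veq v (- x) m.
Proof. by case=> x0 hx; split; [apply/eqP; rewrite oppr_eq0; apply/eqP|rewrite vN]. Qed.

Lemma veqV x m : veq v x m -> veq v (x^-1) (- m).
Proof. case=> /eqP x0 hx; split; first by apply/eqP; rewrite invr_eq0.
by rewrite vV // hx. Qed.

Lemma veqX x m n : veq v x m -> veq v (x ^+ n) (m * n%:Z).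
Proof. case=> /eqP x0 hx; split; first by apply/eqP; rewrite expf_neq0.
by rewrite vX // hx. Qed.

Lemma veq_vge x m : veq v x m -> vge v x m.
Proof. by case=> _ h; right; rewrite h. Qed.

Lemma vge_veq x m k : vge v x m -> veq v x k -> m <= k.
Proof. by case=> [->|h] [] // _ <-. Qed.

Lemma veq_uniq x m k : veq v x m -> veq v x k -> m = k.
Proof. by case=> _ h1 [_ h2]; rewrite -h1 -h2. Qed.

Lemma veq_strict x y m : veq v x m -> vge v y (m + 1) -> veq v (x + y) m.
Proof.
move=> [x0 hx] hy.
case: hy => [->|hy]; first by rewrite addr0; split.
case: (eqVneq y 0) => [->|y0]; first by rewrite addr0; split.
have x0' : x != 0 by apply/eqP.
have hlt : v x < v y by rewrite hx; lia.
have s0 : x + y != 0.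
  apply/negP => /eqP h; have ey : y = - x by rewrite -(addKr x y) h addr0.
  by move: hlt; rewrite ey vN ltxx.
split; first exact/eqP.
have h1 := vD x0' y0 s0.
have e : x = (x + y) + (- y) by rewrite addrK.
have h2 : ((v (x + y) <= v (x + y + - y)) || (v (- y) <= v (x + y + - y))).
  by apply: vD; rewrite ?oppr_eq0 // -e.
rewrite -e vN in h2. rewrite -hx.
case/orP: h1 => h1; case/orP: h2 => h2.
- by apply/eqP; rewrite eq_le h2 h1.
- by move: (lt_le_trans hlt h2); rewrite ltxx.
- by move: (lt_le_trans hlt (le_trans h1 h2)); rewrite ltxx.
- by move: (lt_le_trans hlt h2); rewrite ltxx.
Qed.

Lemma veq_strict' x y m : veq v x m -> vge v (y - x) (m + 1) -> veq v y m.
Proof. by move=> hx hy; have := veq_strict hx hy; rewrite addrC subrK. Qed.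

Lemma vge_nat n : vge v (n%:R) 0.
Proof. elim: n => [|n IH]; first by left.
rewrite -addn1 natrD; apply: vgeD IH _; right; rewrite v1. done. Qed.

Lemma veq0_nz x m : veq v x m -> x != 0.
Proof. by case=> /eqP. Qed.

Lemma vge_veq_ex x m : vge v x m -> x != 0 -> exists2 k, veq v x k & m <= k.
Proof. case=> [-> /eqP //|h] x0; exists (v x) => //; split=> //; exact/eqP. Qed.

Hypothesis hc : v_complete v.
Hypothesis h2 : unitR v 2.
Section Hensel.

Variable F : K.
Hypothesis hF : vge v (F - 1) 1.

Fixpoint newt (k : nat) : K := if k is k'.+1 then (newt k' + F / newt k') / 2 else 1.

Lemma veq1 : veq v 1 0.
Proof. split; [exact/eqP/oner_neq0 | exact: v1]. Qed.

Lemma newt_inv k : [/\ veq v (newt k) 0, vge v (newt k - 1) 1 &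
   vge v (newt k ^+ 2 - F) (k.+1)%:Z].
Proof.
elim: k => [|k [hr hr1 hrF]] /=.
  split; [exact: veq1 | by rewrite subrr; left | ].
  by rewrite expr1n -opprB; apply: vgeN.
set r := newt k in hr hr1 hrF *.
have r0 : r != 0 by apply: veq0_nz hr.
have t0 : (2 : K) != 0 by case: h2 => /eqP.
have hd : (r + F / r) / 2 - r = (F - r ^+ 2) * (2 * r)^-1.
  by field; rewrite t0 r0.
have hd' : vge v ((r + F / r) / 2 - r) (k.+1)%:Z.
  rewrite hd; have := vgeM (vgeN hrF) (veq_vge (veqV (veqM h2 hr))).
  by rewrite opprB => h; apply: vgeW h _; lia.
have hd1 : vge v ((r + F / r) / 2 - r) 1 by apply: vgeW hd' _; lia.
have hr' : veq v ((r + F / r) / 2) 0.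
  by apply: veq_strict' hr _; rewrite add0r.
split => //.
  have -> : (r + F / r) / 2 - 1 = ((r + F / r) / 2 - r) + (r - 1) by ring.
  exact: vgeD.
have -> : ((r + F / r) / 2) ^+ 2 - F = (r ^+ 2 - F) ^+ 2 * ((2 * r) ^+ 2)^-1.
  by field; rewrite t0 r0.
have := vgeM (vgeM hrF hrF) (veq_vge (veqV (veqX 2 (veqM h2 hr)))).
by rewrite -expr2 => h; apply: vgeW h _; lia.
Qed.

Lemma newt_step k : vge v (newt k.+1 - newt k) (k.+1)%:Z.
Proof.
have [hr _ hrF] := newt_inv k.
rewrite /=; set r := newt k in hr hrF *.
have r0 : r != 0 by apply: veq0_nz hr.
have t0 : (2 : K) != 0 by case: h2 => /eqP.
have hd : (r + F / r) / 2 - r = (F - r ^+ 2) * (2 * r)^-1.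
  by field; rewrite t0 r0.
rewrite hd; have := vgeM (vgeN hrF) (veq_vge (veqV (veqM h2 hr))).
by rewrite opprB => h; apply: vgeW h _; lia.
Qed.

Lemma newt_cauchy M p : (M <= p)%N -> vge v (newt p - newt M) (M.+1)%:Z.
Proof.
elim: p => [|p IH].
  by rewrite leqn0 => /eqP ->; rewrite subrr; left.
rewrite leq_eqVlt => /orP [/eqP ->|hp]; first by rewrite subrr; left.
have -> : newt p.+1 - newt M = (newt p.+1 - newt p) + (newt p - newt M) by ring.
apply: vgeD; last exact: IH.
by apply: vgeW (newt_step p) _; lia.
Qed.

Lemma hensel : exists f, f != 0 /\ F = f ^+ 2.
Proof.
have cau : v_cauchy v newt.
  move=> N; exists (absz N) => p q hp hq.
  have := vgeB (newt_cauchy hp) (newt_cauchy hq).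
  have -> : newt p - newt `|N| - (newt q - newt `|N|) = newt p - newt q by ring.
  by move=> h; apply: vgeW h _; lia.
have [l hl] := hc cau.
have Fl : F = l ^+ 2.
  case: (eqVneq (l ^+ 2 - F) 0) => [h|h].
    by apply/eqP; rewrite eq_sym -subr_eq0; apply/eqP.
  pose e := v (l ^+ 2 - F).
  have he : veq v (l ^+ 2 - F) e by split => //; apply/eqP.
  have [M hM] := hl ((absz e).+1)%:Z.
  have hp := hM (maxn M (absz e)) (leq_maxl _ _).
  set p := maxn M (absz e) in hp.
  have [hr _ hrF] := newt_inv p.
  set r := newt p in hp hr hrF.
  have h1 : vge v (l - r) ((absz e).+1)%:Z by rewrite -opprB; apply: vgeN.
  have h0 : vge v (r - l) 0 by apply: vgeW hp _; lia.
  have h3 : vge v (l + r) 0.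
    have -> : l + r = (r + r) - (r - l) by ring.
    by apply: vgeB => //; apply: vgeD; apply: vgeW (veq_vge hr) _.
  have h4 : vge v (l ^+ 2 - F) ((absz e).+1)%:Z.
    have -> : l ^+ 2 - F = (l - r) * (l + r) + (r ^+ 2 - F) by ring.
    apply: vgeD.
      by have := vgeM h1 h3; rewrite addr0.
    apply: vgeW hrF _.
    have : (absz e <= p)%N by apply: leq_maxr.
    lia.
  have := vge_veq h4 he; lia.
have F0 : F != 0.
  have : veq v F 0 by apply: veq_strict' veq1 _; rewrite add0r.
  by case => /eqP.
exists l; split => //; apply/eqP => l0; by move: F0; rewrite Fl l0 expr0n /= eqxx.
Qed.
End Hensel.

Lemma veq_self x : x != 0 -> veq v x (v x).
Proof. by move=> x0; split => //; apply/eqP. Qed.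

Lemma hensel3 X T k : veq v T k -> vge v (X - T ^+ 2) (k * 2 + 1) ->
  exists f, f != 0 /\ X = f ^+ 2.
Proof.
move=> hT hX.
have T0 : T != 0 by apply: veq0_nz hT.
have hF : vge v (X / T ^+ 2 - 1) 1.
  have -> : X / T ^+ 2 - 1 = (X - T ^+ 2) * (T ^+ 2)^-1 by field.
  have := vgeM hX (veq_vge (veqV (veqX 2 hT))).
  by move=> h; apply: vgeW h _; lia.
have [f [f0 hf]] := hensel hF.
exists (f * T); split; first by rewrite mulf_neq0.
by rewrite exprMn -hf mulfVK // expf_neq0.
Qed.

Lemma veq2 : veq v 2 0. Proof. exact: h2. Qed.
Lemma veq4 : veq v 4 0.
Proof. by have := veqM h2 h2; rewrite addr0 -natrM. Qed.
Lemma veq16 : veq v 16 0.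
Proof. by have := veqM veq4 veq4; rewrite addr0 -natrM. Qed.

Lemma sq_from_Q (X Y Q q : K) : X != 0 -> Y ^+ 2 = X * Q -> q != 0 -> Q = q ^+ 2 ->
  trivial_sq_class X.
Proof.
move=> X0 hY q0 hQ.
have Y0 : Y != 0.
  apply/eqP => Y0; move: hY; rewrite Y0 expr0n /= hQ => /esym/eqP.
  by rewrite mulf_eq0 (negPf X0) expf_eq0 /= (negPf q0).
exists (Y / q); split; first by rewrite mulf_neq0 // invr_eq0.
by rewrite exprMn hY hQ exprVn mulfK // expf_neq0.
Qed.

Lemma core_i (A B : K) (n : nat) : veq v A 0 -> veq v B n%:Z -> (0 < n)%N ->
  ((exists z, veq v z 0 /\ vge v (A - z ^+ 2) 1) \/ odd n) ->
  forall X Y, Y ^+ 2 = X ^+ 3 + (- 2 * A) * X ^+ 2 + (A ^+ 2 - 4 * B) * X ->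
  trivial_sq_class (delta_E'_rep A B (Some (X, Y))).
Proof.
move=> hA hB n0 hcase X Y hP.
have h4B : veq v (4 * B) n%:Z by have := veqM veq4 hB; rewrite add0r.
have h4Bg : vge v (- (4 * B)) n%:Z by apply: vgeN; apply: veq_vge.
have h4B1 : vge v (- (4 * B)) 1 by apply: vgeW h4Bg _; lia.
have hAi : vge v A 0 by apply: veq_vge.
have hBi : vge v B 0 by apply: vgeW (veq_vge hB) _; lia.
have hDi : vge v (A ^+ 2 - 4 * B) 0.
  apply: vgeB; first by have := vgeM hAi hAi; rewrite expr2.
  by have := vgeM (veq_vge veq4) hBi.
rewrite /delta_E'_rep /=.
case: (eqVneq X 0) => [X0|X0].
  have Y0 : Y = 0.
    have : Y ^+ 2 = 0 by rewrite hP X0; ring.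
    by move/eqP; rewrite expf_eq0 /= => /eqP.
  rewrite X0 Y0 eqxx /=.
  apply: (hensel3 (T := A) (k := 0)) => //.
  by have -> : A ^+ 2 - 4 * B - A ^+ 2 = - (4 * B) by ring.
rewrite /=.
set Q := X ^+ 2 - 2 * A * X + (A ^+ 2 - 4 * B).
have hYQ : Y ^+ 2 = X * Q by rewrite hP /Q; ring.
have key : (exists q, q != 0 /\ Q = q ^+ 2) -> trivial_sq_class X.
  by case=> q [q0 hq]; apply: sq_from_Q X0 hYQ q0 hq.
have hX := veq_self X0; set m := v X in hX.
have hXi : forall k, k <= m -> vge v X k by move=> k hk; apply: vgeW (veq_vge hX) hk.
case: (ltgtP m 0) => hm.
- apply: key; apply: (hensel3 (T := X) (k := m)) => //.
  have -> : Q - X ^+ 2 = - (2 * A * X) + (A ^+ 2 - 4 * B) by rewrite /Q; ring.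
  apply: vgeD.
    apply: vgeN; have := vgeM (vgeM (veq_vge h2) hAi) (veq_vge hX).
    by move=> h; apply: vgeW h _; lia.
  by apply: vgeW hDi _; lia.
- apply: key; apply: (hensel3 (T := A) (k := 0)) => //.
  have -> : Q - A ^+ 2 = X * X - 2 * A * X - 4 * B by rewrite /Q; ring.
  apply: vgeB; last by apply: vgeW (veq_vge h4B) _; lia.
  apply: vgeB.
    by have := vgeM (hXi 1 hm) (hXi 0 (ltW hm)).
  have := vgeM (vgeM (veq_vge h2) hAi) (hXi 1 hm).
  by rewrite !add0r.
have hgood : forall e, veq v (X - A) e -> e * 2 + 1 <= n%:Z -> trivial_sq_class X.
  move=> e he hen; apply: key; apply: (hensel3 (T := X - A) (k := e)) => //.
  have -> : Q - (X - A) ^+ 2 = - (4 * B) by rewrite /Q; ring.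
  by apply: vgeW h4Bg _.
have hbad : vge v ((X - A) ^+ 2) n%:Z -> vge v (X - A) 1 -> trivial_sq_class X.
  move=> hsq hXA.
  case: hcase => [[z [hz hAz]]|hodd].
    apply: (hensel3 (T := z) (k := 0)) => //.
    have -> : X - z ^+ 2 = (X - A) + (A - z ^+ 2) by ring.
    exact: vgeD.
  exfalso.
  have hQn : vge v ((X - A) ^+ 2) (n%:Z + 1).
    case: (eqVneq (X - A) 0) => [->|XA0]; first by rewrite expr0n; left.
    case: hsq => [/eqP|hsq]; first by rewrite expf_eq0 /= (negPf XA0).
    have := veq_self XA0; set e := v (X - A) => he.
    have := veqX 2 he; move=> [_ he2]; rewrite he2 in hsq.
    right; rewrite he2.
    have := odd_double_half n; rewrite hodd.
    lia.
  have hQv : veq v Q n%:Z.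
    have -> : Q = - (4 * B) + (X - A) ^+ 2 by rewrite /Q; ring.
    by apply: veq_strict => //; apply: veqN.
  have hXQ : veq v (X * Q) n%:Z by have := veqM hX hQv; rewrite hm add0r.
  have Y0 : Y != 0 by apply/eqP => Y0; move: hXQ; rewrite -hYQ Y0 expr0n /=; case.
  have := veqX 2 (veq_self Y0); rewrite hYQ => hY2.
  have := veq_uniq hY2 hXQ.
  have := odd_double_half n; rewrite hodd.
  lia.
case: (eqVneq (X - A) 0) => [XA0|XA0].
  by apply: hbad; rewrite XA0; [rewrite expr0n; left | left].
have := veq_self XA0; set e := v (X - A) => he.
case: (ltP (e * 2 + 1) (n%:Z + 1)) => hen.
  by apply: (hgood e) => //; lia.
apply: hbad.
  have := veq_vge (veqX 2 he); move=> h; apply: vgeW h _; lia.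
apply: vgeW (veq_vge he) _; lia.
Qed.


Lemma pow_exists (k : int) : exists s, veq v s k.
Proof.
case: hv => _ _ [pi [pi0 hpi]].
have hp : veq v pi 1 by split => //; apply/eqP.
case: k => j.
  by exists (pi ^+ j); have := veqX j hp; rewrite mul1r.
exists ((pi ^+ j.+1)^-1); have := veqV (veqX j.+1 hp); rewrite mul1r NegzE.
done.
Qed.

Lemma even_unit (x : K) (k : int) : veq v x (k * 2) -> in_unit_sq_class v x.
Proof.
move=> hx; have [s hs] := pow_exists k.
have s0 : s != 0 by apply: veq0_nz hs.
exists (x / s ^+ 2), s; split => //; last by rewrite divfK // expf_neq0.
have := veqM hx (veqV (veqX 2 hs)); rewrite subrr; done.
Qed.

Lemma core_ii (A B : K) : vge v A 0 -> veq v B 0 -> veq v (A ^+ 2 - 4 * B) 0 ->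
  forall X Y, Y ^+ 2 = X ^+ 3 + (- 2 * A) * X ^+ 2 + (A ^+ 2 - 4 * B) * X ->
  in_unit_sq_class v (delta_E'_rep A B (Some (X, Y))).
Proof.
move=> hAi hB hD X Y hP.
rewrite /delta_E'_rep /=.
case: (eqVneq X 0) => [X0|X0].
  have Y0 : Y = 0.
    have : Y ^+ 2 = 0 by rewrite hP X0; ring.
    by move/eqP; rewrite expf_eq0 /= => /eqP.
  rewrite X0 Y0 eqxx /=.
  by apply: (even_unit (k := 0)); rewrite mul0r.
rewrite /=.
set Q := X ^+ 2 - 2 * A * X + (A ^+ 2 - 4 * B).
have hYQ : Y ^+ 2 = X * Q by rewrite hP /Q; ring.
have hX := veq_self X0; set m := v X in hX.
have hDi := veq_vge hD.
case: (eqVneq m 0) => [m0|m0].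
  by apply: (even_unit (k := 0)); rewrite mul0r -m0.
suff : exists q, veq v Q q /\ exists j, q = j * 2.
  case=> q [hQ [j hj]].
  have Y0 : Y != 0.
    apply/eqP => Y0; have := veqM hX hQ; rewrite -hYQ Y0 expr0n /=; by case.
  have := veqX 2 (veq_self Y0); rewrite hYQ => hY2.
  have := veq_uniq hY2 (veqM hX hQ) => e.
  apply: (even_unit (k := v Y - j)).
  suff -> : (v Y - j) * 2 = m by [].
  lia.
have hfin : forall q, veq v Q q -> (exists j, q = j * 2) -> exists q, veq v Q q /\ exists j, q = j * 2.
  by move=> q hQ hj; exists q.
case: (ltgtP m 0) => hm.
- apply: (hfin (m * 2)); last by exists m.
  have -> : Q = X ^+ 2 + (- (2 * A * X) + (A ^+ 2 - 4 * B)) by rewrite /Q; ring.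
  apply: veq_strict; first exact: veqX.
  apply: vgeD.
    apply: vgeN; have := vgeM (vgeM (veq_vge h2) hAi) (veq_vge hX).
    by move=> h; apply: vgeW h _; lia.
  by apply: vgeW hDi _; lia.
- apply: (hfin 0); last by exists 0.
  have -> : Q = (A ^+ 2 - 4 * B) + (X * X - 2 * A * X) by rewrite /Q; ring.
  apply: veq_strict => //; rewrite add0r.
  have hX1 : vge v X 1 by apply: vgeW (veq_vge hX) _; lia.
  have hX0 : vge v X 0 by apply: vgeW (veq_vge hX) _; lia.
  apply: vgeB; first by have := vgeM hX1 hX0.
  by have := vgeM (vgeM (veq_vge h2) hAi) hX1; rewrite !add0r.
- by move: m0; rewrite hm eqxx.
Qed.


Lemma vgeM0 x y : vge v x 0 -> vge v y 0 -> vge v (x * y) 0.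
Proof. by move=> hx hy; have := vgeM hx hy; rewrite addr0. Qed.

Lemma vgeX0 x n : vge v x 0 -> vge v (x ^+ n) 0.
Proof. move=> hx; elim: n => [|n IH]; first by rewrite expr0; right; rewrite v1.
by rewrite exprS; apply: vgeM0. Qed.

Lemma vgeMl1 x y : vge v x 1 -> vge v y 0 -> vge v (x * y) 1.
Proof. by move=> hx hy; have := vgeM hx hy; rewrite addr0. Qed.

Lemma vgeMr1 x y : vge v x 0 -> vge v y 1 -> vge v (x * y) 1.
Proof. by move=> hx hy; have := vgeM hx hy; rewrite add0r. Qed.

Lemma vgeN0 n : vge v (n%:R) 0. Proof. exact: vge_nat. Qed.

Lemma vge_sq0 x : vge v (x ^+ 2) 0 -> vge v x 0.
Proof.
case: (eqVneq x 0) => [->|x0]; first by left.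
move=> h; have := vge_veq h (veqX 2 (veq_self x0)); right; lia.
Qed.

Lemma veq_sq0 x : veq v (x ^+ 2) 0 -> veq v x 0.
Proof.
move=> h; have x0 : x != 0 by apply/eqP => x0; move: (veq0_nz h); rewrite x0 expr0n eqxx.
have := veq_uniq h (veqX 2 (veq_self x0)); split; [exact/eqP | lia].
Qed.

Lemma c4_int (W : wmodel K) : integral_model v W -> vge v (c4 W) 0.
Proof.
case: W => A1 A2 A3 A4 A6 [/= h1 h2' h3 h4 h6].
rewrite /c4 /b2 /b4 /=.
apply: vgeB.
  by apply: vgeX0; apply: vgeD; [apply: vgeX0 | apply: vgeM0 (vgeN0 4) _].
by apply: vgeM0 (vgeN0 24) _; apply: vgeD; [apply: vgeM0 (vgeN0 2) _ | apply: vgeM0].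
Qed.

Lemma c4_unit (W : wmodel K) : integral_model v W -> vge v (a3 W) 1 -> vge v (a4 W) 1 ->
  veq v (b2 W) 0 -> veq v (c4 W) 0.
Proof.
case: W => A1 A2 A3 A4 A6 [/= h1 h2' h3 h4 h6] h31 h41 hb2.
rewrite /c4.
apply: veq_strict; first by have := veqX 2 hb2; rewrite mul0r.
apply: vgeN; apply: vgeMr1 (vgeN0 24) _; rewrite /b4 /=.
apply: vgeD; [exact: vgeMr1 (vgeN0 2) _ | exact: vgeMr1 h1 _].
Qed.

Lemma split_cong (W : wmodel K) (T : K) : integral_model v W -> vge v (a3 W) 1 ->
  vge v (a4 W) 1 -> vge v (a6 W) 1 -> veq v (b2 W) 0 -> integral v T ->
  vge v (T ^+ 2 + a1 W * T - a2 W) 1 ->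
  exists s, [/\ veq v s 0, vge v (s ^+ 2 - b2 W) 1 & vge v (c6 W + b2 W ^+ 3) 1].
Proof.
case: W => A1 A2 A3 A4 A6 [/= h1 h2' h3 h4 h6] h31 h41 h61 hb2 hT hTT.
rewrite /c6 /b2 /b4 /b6 /= in hb2 *.
have hs : vge v ((2 * T + A1) ^+ 2 - (A1 ^+ 2 + 4 * A2)) 1.
  have -> : (2 * T + A1) ^+ 2 - (A1 ^+ 2 + 4 * A2) = (T ^+ 2 + A1 * T - A2) * 4 by ring.
  exact: vgeMl1 hTT (vgeN0 4).
exists (2 * T + A1); split => //.
  apply: veq_sq0; exact: veq_strict' hb2 hs.
have -> : - (A1 ^+ 2 + 4 * A2) ^+ 3 + 36 * (A1 ^+ 2 + 4 * A2) * (2 * A4 + A1 * A3) -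
    216 * (A3 ^+ 2 + 4 * A6) + (A1 ^+ 2 + 4 * A2) ^+ 3 =
    (2 * A4 + A1 * A3) * (36 * (A1 ^+ 2 + 4 * A2)) - (A3 * A3 + 4 * A6) * 216 by ring.
have hb2i : vge v (A1 ^+ 2 + 4 * A2) 0 by apply: veq_vge hb2.
apply: vgeB; apply: vgeMl1.
- by apply: vgeD; [exact: vgeMr1 (vgeN0 2) _ | exact: vgeMr1 h1 _].
- exact: vgeM0 (vgeN0 36) hb2i.
- apply: vgeD; first exact: vgeMr1 h3 h31.
  exact: vgeMr1 (vgeN0 4) h61.
- exact: vgeN0.
Qed.


Lemma veqE x k k' : veq v x k -> k = k' -> veq v x k'.
Proof. by move=> h <-. Qed.

Lemma veq_cancel c x k : veq v c 0 -> veq v (c * x) k -> veq v x k.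
Proof.
move=> hcc hx; have c0 := veq0_nz hcc.
have := veqM (veqV hcc) hx; rewrite mulKf // => h; apply: veqE h _; lia.
Qed.

Lemma vge_cancel c x k : veq v c 0 -> vge v (c * x) k -> vge v x k.
Proof.
move=> hcc hx; have c0 := veq0_nz hcc.
have := vgeM (veq_vge (veqV hcc)) hx; rewrite mulKf // => h; apply: vgeW h _; lia.
Qed.

Lemma veq8 : veq v 8 0.
Proof. by have := veqM h2 veq4; rewrite addr0 -natrM. Qed.
Lemma veq256 : veq v 256 0.
Proof. by have := veqM veq16 veq16; rewrite addr0 -natrM. Qed.

End Val.

Lemma iso_inv (K : fieldType) (W W' : wmodel K) : iso_model W W' ->
  exists u : K, u != 0 /\ [/\ disc W = u ^+ 12 * disc W', c4 W = u ^+ 4 * c4 W' & c6 W = u ^+ 6 * c6 W'].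
Proof.
case=> u [r [s [t [u0 [h1 h2 h3 h4 h6]]]]].
exists u; split=> //.
case: W' h1 h2 h3 h4 h6 => A1 A2 A3 A4 A6 /= h1 h2 h3 h4 h6.
rewrite /disc /c4 /c6 /b2 /b4 /b6 /b8 /=.
split.
- transitivity (let X1 := u * A1 in let X2 := u^+2 * A2 in let X3 := u^+3*A3 in let X4 := u^+4*A4 in let X6 := u^+6*A6 in
   - (X1 ^+ 2 + 4 * X2) ^+ 2 * (X1 ^+ 2 * X6 + 4 * X2 * X6 - X1 * X3 * X4 + X2 * X3 ^+ 2 - X4 ^+ 2) -
    8 * (2 * X4 + X1 * X3) ^+ 3 - 27 * (X3 ^+ 2 + 4 * X6) ^+ 2 + 9 * (X1 ^+ 2 + 4 * X2) * (2 * X4 + X1 * X3) * (X3 ^+ 2 + 4 * X6)); last by rewrite /=; ring.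
  rewrite /= h1 h2 h3 h4 h6; ring.
- transitivity (let X1 := u * A1 in let X2 := u^+2 * A2 in let X3 := u^+3*A3 in let X4 := u^+4*A4 in
   (X1 ^+ 2 + 4 * X2) ^+ 2 - 24 * (2 * X4 + X1 * X3)); last by rewrite /=; ring.
  rewrite /= h1 h2 h3 h4; ring.
- transitivity (let X1 := u * A1 in let X2 := u^+2 * A2 in let X3 := u^+3*A3 in let X4 := u^+4*A4 in let X6 := u^+6*A6 in
   - (X1 ^+ 2 + 4 * X2) ^+ 3 + 36 * (X1 ^+ 2 + 4 * X2) * (2 * X4 + X1 * X3) - 216 * (X3 ^+ 2 + 4 * X6)); last by rewrite /=; ring.
  rewrite /= h1 h2 h3 h4 h6; ring.
Qed.

Lemma pt_norm (K : fieldType) (u A B x y : K) : u != 0 ->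
  on_curve2 (- 2 * (u ^+ 2 * A)) ((u ^+ 2 * A) ^+ 2 - 4 * (u ^+ 4 * B)) (Some (x, y)) ->
  exists X Y : K, [/\ x = u ^+ 2 * X, y = u ^+ 3 * Y &
     Y ^+ 2 = X ^+ 3 + (- 2 * A) * X ^+ 2 + (A ^+ 2 - 4 * B) * X].
Proof.
move=> u0 /= hP; exists (x / u ^+ 2), (y / u ^+ 3); split.
- by field.
- by field.
apply: (mulfI (expf_neq0 6 u0)).
transitivity (y ^+ 2); first by field.
by rewrite hP; field.
Qed.

Lemma rep_norm (K : fieldType) (u A B X Y : K) : u != 0 ->
  exists s : K, s != 0 /\ delta_E'_rep (u ^+ 2 * A) (u ^+ 4 * B) (Some (u ^+ 2 * X, u ^+ 3 * Y))
    = s ^+ 2 * delta_E'_rep A B (Some (X, Y)).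
Proof.
move=> u0; rewrite /delta_E'_rep /=.
have e2 : (u ^+ 2 * X == 0) = (X == 0) by rewrite mulf_eq0 expf_eq0 (negPf u0).
have e3 : (u ^+ 3 * Y == 0) = (Y == 0) by rewrite mulf_eq0 expf_eq0 (negPf u0).
rewrite e2 e3.
case: ((X == 0) && (Y == 0)).
  by exists (u ^+ 2); split; [rewrite expf_neq0 | ring].
by exists u.
Qed.

Lemma triv_tr (K : fieldType) (s z : K) : s != 0 -> trivial_sq_class z -> trivial_sq_class (s ^+ 2 * z).
Proof. move=> s0 [r [r0 ->]]; exists (s * r); split; [by rewrite mulf_neq0 | ring]. Qed.

Lemma unit_tr (K : fieldType) v (s z : K) : s != 0 -> in_unit_sq_class v z -> in_unit_sq_class v (s ^+ 2 * z).
Proof. move=> s0 [w [r [hw [r0 ->]]]]; exists w, (s * r); split => //; split; [by rewrite mulf_neq0 | ring]. Qed.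


Ltac ilia :=
  repeat match goal with
  | H : @eq ?T _ _ |- _ => first [unify T int | unify T nat]; revert H
  | H : is_true (@Order.le _ _ _ _) |- _ => revert H
  | H : is_true (@Order.lt _ _ _ _) |- _ => revert H
  | H : is_true (leq _ _) |- _ => revert H
  end;
  repeat match goal with H : _ |- _ => clear H end;
  lia.

Theorem lemma3p3 (K : fieldType) (v : K -> int)
  (hv : is_discrete_valuation v) (hcomplete : v_complete v)
  (hchar : unitR v 2)
  (a b : K) (hE : disc (curveE a b) != 0)
  (n : nat)
  (hKE : kodaira_I v (curveE a b) (2 * n)%N)
  (hKE' : kodaira_I v (curveE' a b) n) :
  ((split_mult v (curveE a b) \/ odd n) ->
     forall P, on_curve2 (- 2 * a) (a ^+ 2 - 4 * b) P ->
       trivial_sq_class (delta_E'_rep a b P)) /\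
  (n = 0%N ->
     forall P, on_curve2 (- 2 * a) (a ^+ 2 - 4 * b) P ->
       in_unit_sq_class v (delta_E'_rep a b P)).
Proof.
have h2 := hchar.
case: hKE => W1 [iso1 int1 cond1].
have [u [u0 [d1 c41 c61]]] := iso_inv iso1.
have [A [B [ea eb]]] : exists A B : K, a = u ^+ 2 * A /\ b = u ^+ 4 * B.
  by exists (a / u ^+ 2), (b / u ^+ 4); split; field.
subst a b.
have dE : 16 * B ^+ 2 * (A ^+ 2 - 4 * B) = disc W1.
  by apply: (mulfI (expf_neq0 12 u0)); rewrite -d1 /disc /b2 /b4 /b6 /b8 /=; ring.
have cE : 16 * (A ^+ 2 - 3 * B) = c4 W1.
  by apply: (mulfI (expf_neq0 4 u0)); rewrite -c41 /c4 /b2 /b4 /=; ring.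
case: hKE' => W2 [iso2 int2 cond2].
have [u' [u0' [d2 c42 _]]] := iso_inv iso2.
have [w ew] : exists w : K, u' = u * w by exists (u' / u); field.
subst u'.
have w0 : w != 0 by move: u0'; rewrite mulf_eq0 negb_or => /andP [].
have dE' : 256 * B * (A ^+ 2 - 4 * B) ^+ 2 = w ^+ 12 * disc W2.
  apply: (mulfI (expf_neq0 12 u0)); rewrite [RHS]mulrA -exprMn -d2 /disc /b2 /b4 /b6 /b8 /=; ring.
have cE' : 16 * (A ^+ 2 + 12 * B) = w ^+ 4 * c4 W2.
  apply: (mulfI (expf_neq0 4 u0)); rewrite [RHS]mulrA -exprMn -c42 /c4 /b2 /b4 /=; ring.
have dW1 : disc W1 != 0.
  by move: hE; rewrite d1 mulf_eq0 negb_or => /andP [].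
have [B0 D0] : B != 0 /\ A ^+ 2 - 4 * B != 0.
  split; apply/eqP => h0; move: dW1; rewrite -dE h0 ?expr0n /= ?(mulr0, mul0r) eqxx //.
have hB := veq_self v B0; set beta := v B in hB.
have hD := veq_self v D0; set gamma := v (A ^+ 2 - 4 * B) in hD.
have hw := veq_self v w0; set omega := v w in hw.
have hdE : veq v (disc W1) (beta * 2 + gamma).
  by rewrite -dE; apply: veqE (veqM hv (veqM hv (veq16 hv hchar) (veqX hv 2 hB)) hD) _; ilia.
have hdE' : veq v (w ^+ 12 * disc W2) (beta + gamma * 2).
  by rewrite -dE'; apply: veqE (veqM hv (veqM hv (veq256 hv hchar) hB) (veqX hv 2 hD)) _; ilia.
have hc41i := c4_int hv int1.
split.
- move=> hcase.
  have n1 : (0 < n)%N.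
    case: hcase => [hs|]; last by move=> ho; rewrite lt0n; apply/eqP => n0; move: ho; rewrite n0.
    rewrite lt0n; apply/eqP => n0; rewrite n0 /= in cond1.
    case: hs => W3 [iso3 int3 [a31 a41 a61 hb23 hd3] [T [hT hTT]]].
    have [u3 [u30 [d3 c43 c63]]] := iso_inv iso3.
    have [t et] : exists t : K, u3 = u * t by exists (u3 / u); field.
    subst u3.
    have t0 : t != 0 by move: u30; rewrite mulf_eq0 negb_or => /andP [].
    have dE3 : 16 * B ^+ 2 * (A ^+ 2 - 4 * B) = t ^+ 12 * disc W3.
      apply: (mulfI (expf_neq0 12 u0)); rewrite [RHS]mulrA -exprMn -d3 /disc /b2 /b4 /b6 /b8 /=; ring.
    have cE3 : 16 * (A ^+ 2 - 3 * B) = t ^+ 4 * c4 W3.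
      apply: (mulfI (expf_neq0 4 u0)); rewrite [RHS]mulrA -exprMn -c43 /c4 /b2 /b4 /=; ring.
    have hc43 := c4_unit hv int3 a31 a41 hb23.
    have eq1 := veq_uniq hdE cond1.
    have dW3 : disc W3 != 0.
      by apply/eqP => h0; move: dW1; rewrite -dE dE3 h0 mulr0 eqxx.
    have hd3' := veq_self v dW3.
    have le3 := vge_veq hd3 hd3'.
    have ht := veq_self v t0.
    have e12 : v t * 12 + v (disc W3) = 0.
      have := veqM hv (veqX hv 12 ht) hd3'; rewrite -dE3 dE => h.
      by have := veq_uniq h cond1; ilia.
    have e4 : 0 <= v t * 4.
      have := veqM hv (veqX hv 4 ht) hc43; rewrite -cE3 cE => h.
      by have := vge_veq hc41i h; ilia.
    ilia.
  have e2n : ((2 * n)%N == 0%N) = false by apply/eqP; ilia.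
  rewrite e2n in cond1; case: cond1 => a31 a41 a61 hb21 hd1.
  have en : (n == 0%N) = false by apply/eqP; ilia.
  rewrite en in cond2; case: cond2 => a32 a42 a62 hb22 hd2.
  have hc41 := c4_unit hv int1 a31 a41 hb21.
  have hc42 := c4_unit hv int2 a32 a42 hb22.
  have h3B : veq v (A ^+ 2 - 3 * B) 0 by apply: (veq_cancel hv (veq16 hv hchar)); rewrite cE.
  have eq1 := veq_uniq hdE hd1.
  have eq2 : beta + gamma * 2 = omega * 12 + n%:Z.
    by have := veqM hv (veqX hv 12 hw) hd2 => h; have := veq_uniq hdE' h; ilia.
  have h12 : veq v (16 * (A ^+ 2 + 12 * B)) (omega * 4).
    by rewrite cE'; apply: veqE (veqM hv (veqX hv 4 hw) hc42) _; ilia.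
  have [hA hBn] : veq v A 0 /\ veq v B n%:Z.
    case: (ltgtP beta 0) => hb.
    + exfalso.
      have : veq v (A ^+ 2 - 4 * B) beta.
        have -> : A ^+ 2 - 4 * B = - B + (A ^+ 2 - 3 * B) by ring.
        apply: (@veq_strict K v hv _ (A ^+ 2 - 3 * B) _) (veqN hv hB) _; apply: vgeW (veq_vge h3B) _; ilia.
      by move=> h; have := veq_uniq h hD; ilia.
    + have hA2 : veq v (A ^+ 2) 0.
        have -> : A ^+ 2 = (A ^+ 2 - 3 * B) + 3 * B by ring.
        apply: (@veq_strict K v hv _ (3 * B) _) h3B _.
        by have := vgeM hv (vgeN0 hv 3) (veq_vge hB) => h; apply: vgeW h _; ilia.
      have hA := veq_sq0 hv hA2.
      have hD0 : veq v (A ^+ 2 - 4 * B) 0.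
        apply: (@veq_strict K v hv _ (- (4 * B)) _) hA2 _; apply: (@vgeN K v hv (4 * B)).
        by have := vgeM hv (vgeN0 hv 4) (veq_vge hB) => h; apply: vgeW h _; ilia.
      have := veq_uniq hD0 hD => g0.
      by split => //; apply: veqE hB _; ilia.
    + exfalso.
      have : veq v (A ^+ 2 + 12 * B) 0.
        have -> : A ^+ 2 + 12 * B = 16 * B + (A ^+ 2 - 4 * B) by ring.
        apply: (@veq_strict K v hv _ (A ^+ 2 - 4 * B) _) (veqE (veqM hv (veq16 hv hchar) hB) _) _; first by ilia.
        apply: vgeW (veq_vge hD) _; ilia.
      move=> h; have := veq_uniq (veqM hv (veq16 hv hchar) h) h12; ilia.
  have hcase' : (exists z, veq v z 0 /\ vge v (A - z ^+ 2) 1) \/ odd n.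
    case: hcase => [hs|ho]; last by right.
    left.
    case: hs => W3 [iso3 int3 [a31' a41' a61' hb23 hd3] [T [hT hTT]]].
    have [u3 [u30 [d3 c43 c63]]] := iso_inv iso3.
    have [t et] : exists t : K, u3 = u * t by exists (u3 / u); field.
    subst u3.
    have t0 : t != 0 by move: u30; rewrite mulf_eq0 negb_or => /andP [].
    have cE3 : 16 * (A ^+ 2 - 3 * B) = t ^+ 4 * c4 W3.
      apply: (mulfI (expf_neq0 4 u0)); rewrite [RHS]mulrA -exprMn -c43 /c4 /b2 /b4 /=; ring.
    have c6rel : - 64 * A ^+ 3 + 288 * A * B = t ^+ 6 * c6 W3.
      apply: (mulfI (expf_neq0 6 u0)); rewrite [RHS]mulrA -exprMn -c63 /c6 /b2 /b4 /b6 /=; ring.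
    have hc43 := c4_unit hv int3 a31' a41' hb23.
    have ht : veq v t 0.
      have := veqM hv (veq16 hv hchar) h3B; rewrite cE3 => h.
      have := veq_uniq h (veqM hv (veqX hv 4 (veq_self v t0)) hc43) => e.
      by apply: veqE (veq_self v t0) _; ilia.
    have [s [hs hsb hcb]] := split_cong hv int3 a31' a41' a61' hb23 hT hTT.
    have s0 := veq0_nz hs.
    exists (8 * A ^+ 2 / (t * s) ^+ 3); split.
      apply: veqE (veqM hv (veqM hv (veq8 hv hchar) (veqX hv 2 hA)) (veqV hv (veqX hv 3 (veqM hv ht hs)))) _.
      ilia.
    have E6 : 64 * A ^+ 3 = 288 * A * B - t ^+ 6 * c6 W3 by rewrite -c6rel; ring.
    have -> : A - (8 * A ^+ 2 / (t * s) ^+ 3) ^+ 2 = A * ((t * s) ^+ 6 - 64 * A ^+ 3) * ((t * s) ^+ 6)^-1.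
      by field; rewrite t0 s0.
    rewrite E6.
    have -> : (t * s) ^+ 6 - (288 * A * B - t ^+ 6 * c6 W3) = t ^+ 6 * ((s ^+ 2 - b2 W3) * (s ^+ 4 + s ^+ 2 * b2 W3 + b2 W3 ^+ 2)) + t ^+ 6 * (c6 W3 + b2 W3 ^+ 3) - 288 * A * B by ring.
    have hAi := veq_vge hA.
    have ht6 := vgeX0 hv 6 (veq_vge ht).
    have hb2i := veq_vge hb23.
    have hsi := veq_vge hs.
    have hB1 : vge v B 1 by apply: vgeW (veq_vge hBn) _; ilia.
    have hq : vge v (s ^+ 4 + s ^+ 2 * b2 W3 + b2 W3 ^+ 2) 0.
      apply: (@vgeD K v hv (s ^+ 4 + s ^+ 2 * b2 W3) (b2 W3 ^+ 2)); last exact (vgeX0 hv 2 hb2i).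
      apply: (@vgeD K v hv (s ^+ 4) (s ^+ 2 * b2 W3)); first exact (vgeX0 hv 4 hsi).
      exact (vgeM0 hv (vgeX0 hv 2 hsi) hb2i).
    have hS1 := vgeMl1 hv hsb hq.
    have hS2 := vgeMr1 hv ht6 hS1.
    have hS3 := vgeMr1 hv ht6 hcb.
    have hS4 := vgeD hv hS2 hS3.
    have hS5 := vgeMr1 hv (vgeM0 hv (vgeN0 hv 288) hAi) hB1.
    have hS := vgeB hv hS4 hS5.
    have := vgeM hv (vgeMr1 hv hAi hS) (veq_vge (veqV hv (veqX hv 6 (veqM hv ht hs)))).
    by move=> h; apply: vgeW h _; ilia.
  move=> [[x y]|] hP; last by exists 1; split; [exact: oner_neq0 | rewrite expr1n].
  have [X [Y [ex ey hXY]]] := pt_norm u0 hP.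
  subst x y.
  have [s [s0 ->]] := rep_norm A B X Y u0.
  apply: triv_tr s0 _.
  exact: (core_i hv hcomplete hchar hA hBn n1 hcase' hXY).
- move=> n0; subst n.
  rewrite /= in cond1 cond2.
  have eq1 := veq_uniq hdE cond1.
  have eq2 : beta + gamma * 2 = omega * 12.
    by have := veqM hv (veqX hv 12 hw) cond2 => h; have := veq_uniq hdE' h; ilia.
  have h3B : vge v (A ^+ 2 - 3 * B) 0.
    by apply: (vge_cancel hv (veq16 hv hchar)); rewrite cE.
  have [hb0 hg0] : beta = 0 /\ gamma = 0.
    case: (ltgtP omega 0) => ho.
    + exfalso.
      have : veq v (A ^+ 2 - 3 * B) gamma.
        have -> : A ^+ 2 - 3 * B = (A ^+ 2 - 4 * B) + B by ring.
        apply: (@veq_strict K v hv _ (B) _) hD _; apply: vgeW (veq_vge hB) _; ilia.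
      by move=> h; have := vge_veq h3B h; ilia.
    + exfalso.
      have : veq v (A ^+ 2 - 3 * B) beta.
        have -> : A ^+ 2 - 3 * B = B + (A ^+ 2 - 4 * B) by ring.
        apply: (@veq_strict K v hv _ (A ^+ 2 - 4 * B) _) hB _; apply: vgeW (veq_vge hD) _; ilia.
      by move=> h; have := vge_veq h3B h; ilia.
    + ilia.
  have hB0 : veq v B 0 by apply: veqE hB _.
  have hD0 : veq v (A ^+ 2 - 4 * B) 0 by apply: veqE hD _.
  have hAi : vge v A 0.
    apply: (@vge_sq0 K v hv A).
    have -> : A ^+ 2 = (A ^+ 2 - 3 * B) + 3 * B by ring.
    exact (vgeD hv h3B (vgeM0 hv (vgeN0 hv 3) (veq_vge hB0))).
  move=> [[x y]|] hP.
    have [X [Y [ex ey hXY]]] := pt_norm u0 hP.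
    subst x y.
    have [s [s0 ->]] := rep_norm A B X Y u0.
    apply: unit_tr s0 _.
    exact: (core_ii hv hchar hAi hB0 hD0 hXY).
  exists 1, 1; split; first exact: veq1 hv.
  by split; [exact: oner_neq0 | rewrite expr1n mulr1].
Qed.
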